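(* Let $l,m,k$ be non-negative integers with $2l\le m\le 2k$. Then $$S(k,m,l)=\sum_{d=0}^{k+l-m}\left[\binom{m}{l}-\binom{m}{l-d-1}\right]\left[\binom{2k-m+1}{k-m+l-d}-\binom{2k-m+1}{k-m+l-d-1}\right].$$
   Context: A Dyck path of semilength $k$ (Dyck $k$-path) is a lattice path in $\mathbb{Z}^2$ starting at $(0,0)$, ending at $(2k,0)$, never going below the $x$-axis, each of whose $2k$ steps is either a rise $(1,1)$ or a fall $(1,-1)$. For a Dyck $k$-path $D$ and non-negative integers $l\le m\le 2k$, $S(D,m,l)$ denotes the number of intervals of length $m$ in $D$ (i.e. blocks of $m$ consecutive steps of $D$, one for each starting position $s\in\{1,\dots,2k-m+1\}$) that contain exactly $l$ falls; and $S(k,m,l)=\sum_{D} S(D,m,l)$, the sum over all Dyck $k$-paths $D$. Convention: $\binom{x}{y}=0$ for integers $x\ge 0$ and $y<0$, and $\binom{x}{y}=0$ if $y>x\ge 0$. *)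

(* Defs.v *)
From mathcomp Require Import all_boot all_algebra.
Import GRing.Theory Num.Theory.
Set Implicit Arguments. Unset Strict Implicit. Unset Printing Implicit Defensive.

(* A step is a bool: true = rise (1,1), false = fall (1,-1). *)

Definition height (s : seq bool) : int :=
  \sum_(b <- s) (if b then (1%N)%:Z else - (1%N)%:Z)%R.

Definition is_dyck (s : seq bool) : bool :=
  (height s == 0%R) && all (fun i => (0 <= height (take i s))%R) (iota 0 (size s).+1).

Definition nfalls (s : seq bool) : nat := count negb s.

(* S(D,m,l): number of starting positions s in {1..2k-m+1} (0-based: 0..|D|-m)
   whose block of m consecutive steps contains exactly l falls *)
Definition S_path (D : seq bool) (m l : nat) : nat :=
  count (fun s => nfalls (take m (drop s D)) == l) (iota 0 (size D - m).+1).

Definition S_total (k m l : nat) : nat :=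
  \sum_(t : (2 * k).-tuple bool | is_dyck t) S_path t m l.

Definition binZ (n : nat) (y : int) : int :=
  match y with Posz j => ('C(n, j))%:Z | Negz _ => 0%R end.

(* Main.v *)
Require Import Defs.
From mathcomp Require Import all_boot all_algebra.
From mathcomp Require Import zify ring lra.
Import GRing.Theory Num.Theory.
Fixpoint allseq (n : nat) : seq (seq bool) :=
  if n is n'.+1 then map (cons true) (allseq n') ++ map (cons false) (allseq n')
  else [:: [::]].

Lemma mem_allseq n s : (s \in allseq n) = (size s == n).
Proof.
elim: n s => [|n IH] [|b s] //=.
  by rewrite mem_cat; apply/orP => -[] /mapP [].
rewrite mem_cat eqSS -IH.
case: b.
  rewrite mem_map; last by move=> x y [].
  by case: (s \in allseq n) => //=; apply/mapP => -[].
rewrite (mem_map (f := cons false)); last by move=> x y [].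
by rewrite orbC; case: (s \in allseq n) => //=; apply/mapP => -[].
Qed.

Lemma uniq_allseq n : uniq (allseq n).
Proof.
elim: n => [|n IH] //=.
rewrite cat_uniq !map_inj_uniq ?IH //=; try by move=> x y [].
rewrite andbT; apply/hasPn => x /mapP [y _ ->]; apply/negP => /mapP [z _] //.
Qed.

Lemma sum_tuple n (P : pred (seq bool)) (F : seq bool -> nat) :
  \sum_(t : n.-tuple bool | P t) F t = \sum_(s <- allseq n | P s) F s.
Proof.
have Hp : perm_eq (allseq n) [seq val t | t in {: n.-tuple bool}].
  apply: uniq_perm; first exact: uniq_allseq.
    rewrite map_inj_uniq ?enum_uniq //; exact: val_inj.
  move=> s; rewrite mem_allseq; apply/idP/idP.
    move=> Hs; apply/mapP; exists (Tuple Hs) => //; by rewrite mem_enum.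
  by move=> /mapP [t _ ->]; rewrite size_tuple.
by rewrite (perm_big _ Hp) big_image_cond.
Qed.

Lemma sum_allseq_cat p q (F : seq bool -> nat) :
  \sum_(s <- allseq (p + q)) F s = \sum_(x <- allseq p) \sum_(y <- allseq q) F (x ++ y).
Proof.
elim: p F => [|p IH] F /=; first by rewrite big_seq1.
by rewrite !big_cat !big_map /= !IH.
Qed.

Fixpoint walk (a : nat) (s : seq bool) : option nat :=
  match s with
  | [::] => Some a
  | b :: s' => if b then walk a.+1 s' else (if a is a'.+1 then walk a' s' else None)
  end.

Lemma walk_cat a x y : walk a (x ++ y) = if walk a x is Some h then walk h y else None.
Proof.
elim: x a => [|b x IH] a //=.
by case: b; [|case: a => [|a]] => //.
Qed.

Lemma walk_size a s b : walk a s = Some b -> (a + size s = b + 2 * nfalls s)%N.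
Proof.
rewrite /nfalls.
elim: s a => [|c s IH] a /=; first by move=> [->]; rewrite addn0.
case: c => [/IH|]; first by simpl; lia.
by case: a => [|a] // /IH /=; lia.
Qed.

Lemma height_cons b s : height (b :: s) = ((if b then 1 else -1) + height s)%R.
Proof. by rewrite /height big_cons. Qed.

Lemma height_nil : height [::] = 0%R.
Proof. by rewrite /height big_nil. Qed.

Lemma walk_height a s b : walk a s = Some b -> (a%:Z + height s = b%:Z)%R.
Proof.
elim: s a => [|c s IH] a /=; first by move=> [->]; rewrite height_nil addr0.
rewrite height_cons.
case: c => [/IH|]; first by lia.
by case: a => [|a] // /IH; lia.
Qed.

Lemma walk_all a s :
  all (fun i => (0 <= a%:Z + height (take i s))%R) (iota 0 (size s).+1) = (walk a s != None).
Proof.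
elim: s a => [|c s IH] a; first by rewrite /= height_nil addr0 andbT.
have -> : iota 0 (size (c :: s)).+1 = 0 :: map (addn 1) (iota 0 (size s).+1) by rewrite -iotaDl.
have E (f : nat -> bool) : all f (0 :: map (addn 1) (iota 0 (size s).+1)) = f 0 && all (fun i => f i.+1) (iota 0 (size s).+1).
  by rewrite [LHS]/= all_map.
rewrite E.
have H0 : forall c, take 0 (c :: s) = [::] by [].
case: c.
  rewrite [walk _ _]/= -IH H0 height_nil addr0.
  have -> : (0 <= a%:Z)%R by lia.
  rewrite andTb; apply: eq_all => i; rewrite [take _ _]/= height_cons; lia.
case: a => [|a].
  by rewrite /= take0 height_cons height_nil.
rewrite [walk _ _]/= -IH H0 height_nil addr0.
have -> : (0 <= a.+1%:Z)%R by lia.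
rewrite andTb; apply: eq_all => i; rewrite [take _ _]/= height_cons; lia.
Qed.

Lemma dyck_walk s : is_dyck s = (walk 0 s == Some 0).
Proof.
rewrite /is_dyck.
have -> : all (fun i => (0 <= height (take i s))%R) (iota 0 (size s).+1) =
          all (fun i => (0 <= 0%:Z + height (take i s))%R) (iota 0 (size s).+1).
  by apply: eq_all => i; rewrite add0r.
rewrite walk_all.
case E: (walk 0 s) => [b|]; last by rewrite andbF.
move/walk_height: E; rewrite add0r => ->.
by rewrite andbT.
Qed.

Fixpoint Wc (N a b : nat) : nat :=
  if N is N'.+1 then Wc N' a.+1 b + (if a is a'.+1 then Wc N' a' b else 0)
  else (a == b : nat).

Lemma Wc_last N a b : Wc N.+1 a b = (if b is b'.+1 then Wc N a b' else 0) + Wc N a b.+1.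
Proof.
elim: N a b => [|N IH] a b.
  case: a => [|a]; case: b => [|b] //=; rewrite ?eqSS ?addn0 //.
have -> : Wc N.+2 a b = Wc N.+1 a.+1 b + (if a is a'.+1 then Wc N.+1 a' b else 0) by [].
rewrite IH.
case: a => [|a]; [rewrite addn0 | rewrite IH]; case: b => [|b] /=; lia.
Qed.

Lemma Wc_sym N a b : Wc N a b = Wc N b a.
Proof.
elim: N a b => [|N IH] a b; first by rewrite /= eq_sym.
rewrite [RHS]Wc_last /= (IH a.+1 b). case: a => [|a]; rewrite ?(IH a b); lia.
Qed.

Lemma Wc_high N a b : (a + N < b)%N -> Wc N a b = 0.
Proof.
elim: N a b => [|N IH] a b /=.
  move=> h; case: eqP => // E; lia.
move=> h; rewrite IH; last lia. case: a h => [|a] h //. rewrite IH //; lia.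
Qed.

Lemma Wc_conv N h e : Wc N.+1 0 (h + e + 1) = \sum_(0 <= p < N.+1) Wc p 0 h * Wc (N - p) 0 e.
Proof.
elim: N e => [|N IH] e.
  rewrite big_nat1 /= addn0 addn1. case: h => [|h]; case: e => [|e] //=.
case: e => [|e].
  have -> : Wc N.+2 0 (h + 0 + 1) = Wc N.+1 0 h + Wc N.+1 0 (h + 1 + 1).
    rewrite Wc_last. have -> : h + 0 + 1 = h.+1 by lia. by have -> : h + 1 + 1 = h.+2 by lia.
  rewrite IH [in RHS]big_nat_recr // subnn (_ : Wc 0 0 0 = 1) // muln1 addnC; congr (_ + _).
  apply: eq_big_nat => p /andP [_ Hp].
  rewrite (_ : N.+1 - p = (N - p).+1); last lia.
  by rewrite Wc_last.
have -> : Wc N.+2 0 (h + e.+1 + 1) = Wc N.+1 0 (h + e + 1) + Wc N.+1 0 (h + e.+2 + 1).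
  rewrite Wc_last. have -> : h + e.+1 + 1 = (h + e + 1).+1 by lia. by have -> : h + e.+2 + 1 = (h + e + 1).+2 by lia.
rewrite IH IH -big_split [in RHS]big_nat_recr // subnn (_ : Wc 0 0 e.+1 = 0) // muln0.
apply: (etrans _ (esym (addn0 _))).
apply: eq_big_nat => p /andP [_ Hp].
rewrite (_ : N.+1 - p = (N - p).+1); last lia.
by rewrite Wc_last mulnDr.
Qed.


Lemma sum_pick M c (F : nat -> nat) : (c < M)%N ->
  \sum_(0 <= h < M) F h * (h == c) = F c.
Proof.
move=> cM.
rewrite (big_cat_nat _ (n := c)) //=; last by apply: ltnW.
rewrite big1_seq; last first.
  move=> i /andP [_]; rewrite mem_index_iota => /andP [_ Hi].
  by rewrite (_ : (i == c) = false) ?muln0 //; apply/eqP; lia.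
rewrite add0n big_ltn // eqxx muln1 big1_seq ?addn0 //.
move=> i /andP [_]; rewrite mem_index_iota => /andP [Hi _].
by rewrite (_ : (i == c) = false) ?muln0 //; apply/eqP; lia.
Qed.

Lemma sum_walk N a M (g : nat -> nat) : (N + a < M)%N ->
  \sum_(x <- allseq N) (if walk a x is Some h then g h else 0) =
  \sum_(0 <= h < M) Wc N a h * g h.
Proof.
elim: N a => [|N IH] a H.
  rewrite /= big_seq1 /= -(@sum_pick M a g); last lia.
  by apply: eq_bigr => h _; rewrite eq_sym mulnC.
rewrite /= big_cat !big_map /= (IH a.+1); last lia.
have -> : \sum_(j <- allseq N) (match walk a (false :: j) with Some h => g h | None => 0 end) =
          \sum_(0 <= h < M) (if a is a'.+1 then Wc N a' h else 0) * g h.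
  case: a H => [|a] H.
    by rewrite big1 ?big1 // => i _; rewrite mul0n.
  by rewrite /= (IH a) //; lia.
by rewrite -big_split; apply: eq_bigr => h _; rewrite mulnDl.
Qed.

Lemma count_sumb (T : Type) (a : pred T) r : count a r = \sum_(j <- r) (a j : nat).
Proof. by elim: r => [|x r IH]; rewrite ?big_nil ?big_cons //= IH. Qed.

Lemma sum_zero q a : \sum_(z <- allseq q) ((walk a z == Some 0) : nat) = Wc q a 0.
Proof.
transitivity (\sum_(z <- allseq q) (if walk a z is Some e then ((e == 0) : nat) else 0)).
  by apply: eq_bigr => z _; case: (walk a z) => [[|e]|].
rewrite (@sum_walk q a (q + a).+1) //.
rewrite -(@sum_pick (q + a).+1 0 (Wc q a)) //.
Qed.

Lemma Tp_eq n m l p q : (2 * l <= m)%N -> n = p + (m + q) ->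
  \sum_(s <- allseq n) ((walk 0 s == Some 0) && (nfalls (take m (drop p s)) == l) : nat)
  = \sum_(0 <= h < n.+1) Wc p 0 h * (Wc m h (h + (m - 2 * l)) * Wc q (h + (m - 2 * l)) 0).
Proof.
move=> Hl Hn; rewrite Hn; set r := m - 2 * l.
rewrite sum_allseq_cat.
transitivity (\sum_(x <- allseq p) (if walk 0 x is Some h then Wc m h (h + r) * Wc q (h + r) 0 else 0));
  last by apply: sum_walk; lia.
rewrite big_seq [RHS]big_seq; apply: eq_bigr => x; rewrite mem_allseq => /eqP Hx.
rewrite sum_allseq_cat.
case E: (walk 0 x) => [h|]; last first.
  by rewrite big1 // => y _; rewrite big1 // => z _; rewrite walk_cat E.
transitivity (\sum_(y <- allseq m) (if walk h y is Some h' then (h' == h + r) * Wc q h' 0 else 0)).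
  rewrite big_seq [RHS]big_seq; apply: eq_bigr => y; rewrite mem_allseq => /eqP Hy.
  under eq_bigr => z _ do rewrite drop_size_cat // take_size_cat // walk_cat E walk_cat.
  case E2: (walk h y) => [h'|]; last first.
    by rewrite big1.
  have Hs := walk_size _ _ _ E2; rewrite Hy in Hs.
  have -> : (nfalls y == l) = (h' == h + r) by apply/eqP/eqP; lia.
  case: eqP => _.
    rewrite mul1n -sum_zero; apply: eq_bigr => z _.
    by rewrite andbT.
  by rewrite mul0n big1 // => z _; rewrite andbF.
rewrite (@sum_walk m h (m + h).+1 (fun h' => (h' == h + r) * Wc q h' 0)); last lia.
rewrite -(@sum_pick (m + h).+1 (h + r) (fun h' => Wc m h h' * Wc q h' 0)); last lia.
by apply: eq_bigr => h' _; rewrite mulnCA mulnC.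
Qed.

Lemma S_nat k m l : (2 * l <= m)%N -> (m <= 2 * k)%N ->
  S_total k m l = \sum_(0 <= h < (2 * k).+1)
     Wc m h (h + (m - 2 * l)) * Wc (2 * k - m).+1 0 (h + (h + (m - 2 * l)) + 1).
Proof.
move=> Hl Hm.
rewrite /S_total (sum_tuple (2 * k) is_dyck (fun s => S_path s m l)).
set n := 2 * k.
transitivity (\sum_(s <- allseq n) \sum_(0 <= p < (n - m).+1)
     ((walk 0 s == Some 0) && (nfalls (take m (drop p s)) == l) : nat)).
  rewrite big_mkcond /= big_seq [RHS]big_seq.
  apply: eq_bigr => s; rewrite mem_allseq => /eqP Hs.
  rewrite dyck_walk /S_path count_sumb Hs /index_iota subn0.
  by case: (walk 0 s == Some 0) => //=; rewrite big1.
rewrite exchange_big.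
transitivity (\sum_(0 <= p < (n - m).+1) \sum_(0 <= h < n.+1)
   Wc p 0 h * (Wc m h (h + (m - 2 * l)) * Wc (n - m - p) (h + (m - 2 * l)) 0)).
  apply: eq_big_nat => p /andP [_ Hp].
  by apply: Tp_eq => //; lia.
rewrite exchange_big.
apply: eq_bigr => h _.
rewrite Wc_conv big_distrr.
apply: eq_bigr => p _.
by rewrite (Wc_sym _ (h + _) 0) mulnCA.
Qed.
Local Open Scope ring_scope.

Lemma binZ_neg N (y : int) : y < 0 -> binZ N y = 0.
Proof. by case: y. Qed.

Lemma binZS N (y : int) : binZ N.+1 y = binZ N y + binZ N (y - 1).
Proof.
case: y => [[|j]|n].
- by rewrite (@binZ_neg N (0 - 1)) // addr0 /= !bin0.
- have -> : (Posz j.+1 - 1) = Posz j by lia.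
  by rewrite /= binS PoszD addrC.
- rewrite !binZ_neg //; lia.
Qed.

Lemma Wc_closed N a b f : (a + N = b + 2 * f)%N ->
  (Wc N a b)%:Z = binZ N f - binZ N (f%:Z - a%:Z - 1).
Proof.
elim: N a b f => [|N IH] a b f H.
  rewrite addn0 in H; subst a.
  case: f => [|f].
    by rewrite muln0 addn0 /= eqxx binZ_neg //; lia.
  rewrite (@binZ_neg 0 (_ - _ - 1)); last lia.
  rewrite /= bin0n subr0; case: eqP => //; lia.
have -> : Wc N.+1 a b = (Wc N a.+1 b + (if a is a'.+1 then Wc N a' b else 0))%N by [].
rewrite PoszD (IH a.+1 b f); last lia.
case: a H => [|a] H.
  rewrite !binZS /=.
  have -> : f%:Z - 1%:Z - 1 = (f%:Z - 1) - 1 by lia.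
  have -> : f%:Z - 0%:Z - 1 = f%:Z - 1 by lia.
  ring.
case: f H => [|f] H.
  rewrite Wc_high; last lia.
  rewrite (@binZ_neg N (_ - _ - 1)) ?(@binZ_neg N.+1 (_ - _ - 1)); try lia.
  by rewrite /= !bin0.
rewrite (IH a b f); last lia.
rewrite !binZS.
have -> : f.+1%:Z - a.+2%:Z - 1 = (f.+1%:Z - a.+1%:Z - 1) - 1 by lia.
have -> : f%:Z - a%:Z - 1 = (f.+1%:Z - a.+1%:Z - 1) by lia.
have -> : Posz f = f.+1%:Z - 1 by lia.
ring.
Qed.

Theorem theorem1 (k m l : nat) :
  (2 * l <= m)%N -> (m <= 2 * k)%N ->
  (S_total k m l)%:Z =
  \sum_(0 <= d < (k + l - m).+1 | (m <= k + l)%N)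
    (binZ m l%:Z - binZ m (l%:Z - d%:Z - 1))
    * (binZ (2 * k - m).+1 (k%:Z - m%:Z + l%:Z - d%:Z)
       - binZ (2 * k - m).+1 (k%:Z - m%:Z + l%:Z - d%:Z - 1)).
Proof.
move=> Hl Hm.
rewrite S_nat // (big_morph Posz PoszD (erefl (Posz 0%N))).
case: (leqP m (k + l)) => Hmk; last first.
  rewrite [RHS]big_pred0 // big1 // => h _.
  by rewrite (@Wc_high (2 * k - m).+1 0) ?muln0 //; lia.
rewrite (big_cat_nat _ (n := (k + l - m).+1)) //; last lia.
rewrite -[RHS]addr0; congr (_ + _); last first.
  rewrite big1_seq // => h /andP [_]; rewrite mem_index_iota => /andP [Hh _].
  by rewrite (@Wc_high (2 * k - m).+1 0) ?muln0 //; lia.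
apply: eq_big_nat => h /andP [_ Hh].
rewrite PoszM (@Wc_closed m h (h + (m - 2 * l)) l); last lia.
rewrite (@Wc_closed (2 * k - m).+1 0 (h + (h + (m - 2 * l)) + 1) (k + l - m - h)); last lia.
have -> : Posz (k + l - m - h)%N = k%:Z - m%:Z + l%:Z - h%:Z by lia.
by rewrite subr0.
Qed.
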